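(* For all $\phi,\psi,\chi\in\mathcal{L}(\boxdot)$, the formula $\phi\to\boxdot((\boxdot\phi\wedge\boxdot(\phi\to\psi)\wedge\neg\boxdot\psi)\to\chi)$ is valid on the class of symmetric bimodal frames (both $R_1$ and $R_2$ symmetric).
   Context: Fix a nonempty set $\mathbf{P}$ of propositional variables. A bimodal model is $\langle S,R_1,R_2,V\rangle$ with $S$ nonempty, $R_1,R_2\subseteq S\times S$, $V:\mathbf{P}\to\mathcal{P}(S)$. $\mathcal{L}(\boxdot):\ \phi::=p\mid\neg\phi\mid(\phi\wedge\phi)\mid\boxdot\phi$. Truth: $\mathcal{M},s\vDash\boxdot\phi$ iff for all $t,u$ with $sR_1t$ and $sR_2u$, ($\mathcal{M},t\vDash\phi\iff\mathcal{M},u\vDash\phi$); atoms and Booleans as usual. Valid on a class of frames means true at every state of every model based on a frame of the class. *)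

(* Defs.v *)
Inductive form (P : Type) : Type :=
| Var : P -> form P
| Neg : form P -> form P
| And : form P -> form P -> form P
| Bdot : form P -> form P.

Arguments Var {P} _.
Arguments Neg {P} _.
Arguments And {P} _ _.
Arguments Bdot {P} _.

Definition Imp {P : Type} (a b : form P) : form P := Neg (And a (Neg b)).

Record frame := {
  st : Type;
  st_inhabited : inhabited st;
  R1 : st -> st -> Prop;
  R2 : st -> st -> Prop
}.

Fixpoint sat {P : Type} (F : frame) (V : P -> st F -> Prop) (s : st F)
  (phi : form P) : Prop :=
  match phi with
  | Var p => V p s
  | Neg a => ~ sat F V s a
  | And a b => sat F V s a /\ sat F V s b
  | Bdot a => forall t u, R1 F s t -> R2 F s u ->
                (sat F V t a <-> sat F V u a)
  end.

Definition symmetric_frame (F : frame) : Prop :=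
  (forall x y, R1 F x y -> R1 F y x) /\ (forall x y, R2 F x y -> R2 F y x).

Definition valid_on {P : Type} (C : frame -> Prop) (phi : form P) : Prop :=
  forall F : frame, C F -> forall (V : P -> st F -> Prop) (s : st F), sat F V s phi.

(* Main.v *)
Require Import Defs.
From Stdlib Require Import Classical.

Lemma key (P : Type) (F : frame) (V : P -> st F -> Prop) (phi psi : form P) (t : st F) :
  (exists x, (R1 F t x \/ R2 F t x) /\ sat F V x phi) ->
  ~ (sat F V t (Bdot phi) /\ sat F V t (Bdot (Imp phi psi)) /\ ~ sat F V t (Bdot psi)).
Proof.
  intros [x [Hx Hp]] [H1 [H2 H3]]. apply H3. unfold Imp in *. simpl in *.
  intros a b Ha Hb.
  assert (Pab : sat F V a phi /\ sat F V b phi).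
  { destruct Hx as [Hx|Hx].
    - assert (Pb : sat F V b phi) by (apply (H1 x b Hx Hb); exact Hp).
      split; [apply (H1 a b Ha Hb); exact Pb | exact Pb].
    - assert (Pa : sat F V a phi) by (apply (H1 a x Ha Hx); exact Hp).
      split; [exact Pa | apply (H1 a b Ha Hb); exact Pa]. }
  destruct Pab as [Pa Pb].
  specialize (H2 a b Ha Hb).
  split; intro Hq; apply NNPP; intro Hn.
  - apply (proj1 H2 (fun Hc => proj2 Hc Hq)). split; assumption.
  - apply (proj2 H2 (fun Hc => proj2 Hc Hq)). split; assumption.
Qed.

Theorem mainTheorem13 (P : Type) (HP : inhabited P) (phi psi chi : form P) :
  valid_on symmetric_frame
    (Imp phi (Bdot (Imp (And (And (Bdot phi) (Bdot (Imp phi psi))) (Neg (Bdot psi))) chi))).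
Proof.
  intros F [S1 S2] V s. unfold Imp. simpl. intros [Hphi Hn]. apply Hn. clear Hn.
  intros t u Ht Hu.
  split; intros _ [[[A1 A2] A3] _].
  - apply (key P F V phi psi u).
    + exists s. split; [right; apply S2; exact Hu | exact Hphi].
    + split; [exact A1 | split; [exact A2 | exact A3]].
  - apply (key P F V phi psi t).
    + exists s. split; [left; apply S1; exact Ht | exact Hphi].
    + split; [exact A1 | split; [exact A2 | exact A3]].
Qed.
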